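(* Let $G$ be a finite group and $C$ a conjugacy class of $G$, $C\ne\{1\}$, whose elements generate $G$. Then the power series $\chi_{(G,C)}(t)=\sum_{k\ge0}h_kt^k$ is a rational function of $t$, where $h_k$ is the number of elements $s\in S(G,C)^G_{\mathbf 1}$ of length $k$.
   Context: The factorization semigroup $S(G,C)$ is generated by symbols $x_g$, $g\in C$, subject to $x_{g_1}x_{g_2}=x_{g_2}x_{g_2^{-1}g_1g_2}=x_{g_1g_2g_1^{-1}}x_{g_1}$ ($g_1,g_2\in C$); $\alpha_G:S(G,C)\to G$, $x_g\mapsto g$. The length of $s$ is the number of factors in any expression of $s$ as a product of the $x_g$. For $s=x_{g_1}\cdots x_{g_n}$, $G_s$ is the subgroup generated by $g_1,\dots,g_n$ (well defined). $S(G,C)^G_{\mathbf 1}=\{s: G_s=G,\ \alpha_G(s)=1\}$. *)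

(* Defs.v *)
From mathcomp Require Import all_boot all_algebra all_fingroup.
Set Implicit Arguments. Unset Strict Implicit. Unset Printing Implicit Defensive.

Import GroupScope.

Section Factorization.
Variable gT : finGroupType.

(* One elementary application (left-to-right) of one of the defining relations
   x_{g1} x_{g2} = x_{g2} x_{g2^-1 g1 g2}  and  x_{g1} x_{g2} = x_{g1 g2 g1^-1} x_{g1}
   (g1, g2 in C) at positions i, i+1 of the word s, producing t.
   Note: in MathComp  g1 ^ g2 = g2^-1 * g1 * g2. *)
Definition hstep (C : {set gT}) (s t : seq gT) : bool :=
  [exists i : 'I_(size s),
    let a := nth 1 s i in let b := nth 1 s i.+1 in
    [&& i.+1 < size s, a \in C, b \in C &
       (t == take i s ++ [:: b; a ^ b] ++ drop i.+2 s)
    || (t == take i s ++ [:: a * b * a^-1; a] ++ drop i.+2 s)]].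

(* Symmetric version on words of length k; the congruence generated by the
   relations, restricted to words of length k, is  connect (hrel C k). *)
Definition hrel (C : {set gT}) (k : nat) : rel (k.-tuple gT) :=
  fun s t => hstep C s t || hstep C t s.

(* Words of length k over C representing elements of S(G,C)^G_1:
   the letters generate G and their product is 1. *)
Definition Wk (G : {group gT}) (C : {set gT}) (k : nat) : {set k.-tuple gT} :=
  [set t : k.-tuple gT | [&& all (fun x => x \in C) t,
                            <<[set x in (t : seq gT)]>> == (G : {set gT})
                          & \prod_(x <- t) x == 1]].

(* h_k : number of elements of S(G,C)^G_1 of length k, i.e. number of
   equivalence classes of such words. *)
Definition hcount (G : {group gT}) (C : {set gT}) (k : nat) : nat :=
  #|[set [set u | connect (@hrel C k) t u] | t in Wk G C k]|.

End Factorization.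

(* Main.v *)
Require Import Defs.
From mathcomp Require Import all_boot all_algebra all_fingroup.
From Stdlib Require Import Classical Lia.
From mathcomp Require Import zify.
Import GRing.Theory.
Set Implicit Arguments. Unset Strict Implicit. Unset Printing Implicit Defensive.

Section Comb.
Local Open Scope group_scope.
Variable gT : finGroupType.
Variable C : {set gT}.

Definition bstep (s t : seq gT) : Prop :=
  exists p q a b, [/\ a \in C, b \in C, s = p ++ [:: a, b & q] &
     t = p ++ [:: b, a ^ b & q] \/ t = p ++ [:: a * b * a^-1, a & q]].

Inductive eqv : seq gT -> seq gT -> Prop :=
| eqv_refl s : eqv s s
| eqv_step s t : bstep s t -> eqv s t
| eqv_sym s t : eqv s t -> eqv t s
| eqv_trans s u t : eqv s u -> eqv u t -> eqv s t.

Lemma bstep_hstep s t : bstep s t -> hstep C s t.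
Proof.
case=> p [q [a [b [aC bC -> ht]]]].
have lt : size p < size (p ++ [:: a, b & q]) by rewrite size_cat /= addnS ltnS leq_addr.
apply/existsP; exists (Ordinal lt) => /=.
rewrite nth_cat ltnn subnn /=.
have e1 : forall y, nth y (p ++ [:: a, b & q]) (size p).+1 = b.
  by move=> y; rewrite nth_cat ltnNge leqnSn /= subSn // subnn.
have e2 : drop (size p).+2 (p ++ [:: a, b & q]) = q.
  by rewrite -addn2 drop_cat ltnNge leq_addr /= addKn /= drop0.
rewrite e1 e2 take_size_cat // aC bC size_cat /= !addnS !ltnS leq_addr /=.
by case: ht => ->; rewrite eqxx ?orbT.
Qed.

Lemma hstep_bstep s t : hstep C s t -> bstep s t.
Proof.
case/existsP=> i /=; set a := nth 1 s i; set b := nth 1 s i.+1.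
case/and4P=> lt aC bC ht.
have es : s = take i s ++ [:: a, b & drop i.+2 s].
  by rewrite /a /b -drop_nth // -drop_nth 1?ltnW // cat_take_drop.
exists (take i s), (drop i.+2 s), a, b; split=> //.
by case/orP: ht => /eqP ->; [left|right].
Qed.

Lemma bstep_cat p q s t : bstep s t -> bstep (p ++ s ++ q) (p ++ t ++ q).
Proof.
case=> p' [q' [a [b [aC bC -> ht]]]].
exists (p ++ p'), (q' ++ q), a, b; split=> //; first by rewrite -!catA.
by case: ht => ->; [left|right]; rewrite -!catA.
Qed.

Lemma eqv_cat p q s t : eqv s t -> eqv (p ++ s ++ q) (p ++ t ++ q).
Proof.
elim=> {s t} [s|s t /(bstep_cat p q) h|s t _ h|s u t _ h1 _ h2].
- exact: eqv_refl.
- exact: eqv_step.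
- exact: eqv_sym.
- exact: eqv_trans h1 h2.
Qed.

Lemma eqv_catl p s t : eqv s t -> eqv (p ++ s) (p ++ t).
Proof. by move/(eqv_cat p [::]); rewrite !cats0. Qed.

Lemma eqv_catr q s t : eqv s t -> eqv (s ++ q) (t ++ q).
Proof. by move/(eqv_cat [::] q). Qed.


Lemma bstep_size s t : bstep s t -> size t = size s.
Proof. by case=> p [q [a [b [_ _ -> [->|->]]]]]; rewrite !size_cat. Qed.

Lemma eqv_size s t : eqv s t -> size t = size s.
Proof.
elim=> [//|s' t' /bstep_size //|s' t' _ -> //|s' u t' _ h1 _ h2]; congruence.
Qed.

Lemma bstep_prod s t : bstep s t -> \prod_(y <- t) y = \prod_(y <- s) y.
Proof.
case=> p [q [a [b [_ _ -> [->|->]]]]]; rewrite !big_cat !big_cons; congr (_ * _).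
  by rewrite /= !mulgA mulgV mul1g.
by rewrite /= !mulgA mulgKV.
Qed.

Lemma eqv_prod s t : eqv s t -> \prod_(y <- t) y = \prod_(y <- s) y.
Proof.
elim=> [//|s' t' /bstep_prod //|s' t' _ -> //|s' u t' _ h1 _ h2]; congruence.
Qed.

Definition gens (s : seq gT) := <<[set y in s]>>.

Lemma bstep_gen_sub s t : bstep s t -> gens t \subset gens s.
Proof.
case=> p [q [a [b [_ _ -> ht]]]]; rewrite gen_subG; apply/subsetP => y.
have mS z : z \in p ++ [:: a, b & q] -> z \in gens (p ++ [:: a, b & q]).
  by move=> hz; apply: mem_gen; rewrite inE.
have aS : a \in gens (p ++ [:: a, b & q]) by apply: mS; rewrite mem_cat !inE eqxx orbT.
have bS : b \in gens (p ++ [:: a, b & q]) by apply: mS; rewrite mem_cat !inE eqxx !orbT.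
rewrite inE; case: ht => -> ; rewrite mem_cat !inE.
  case/or4P=> [hp|/eqP->|/eqP->|hq] //; first (by apply: mS; rewrite mem_cat hp);
    last (by apply: mS; rewrite mem_cat !inE hq !orbT).
  exact: groupJ.
case/or4P=> [hp|/eqP->|/eqP->|hq] //; first (by apply: mS; rewrite mem_cat hp);
  last (by apply: mS; rewrite mem_cat !inE hq !orbT).
by rewrite !groupM ?groupV.
Qed.

Lemma bstep_gen_sup s t : bstep s t -> gens s \subset gens t.
Proof.
case=> p [q [a [b [_ _ -> ht]]]]; rewrite gen_subG; apply/subsetP => y.
set T := t.
have mS z : z \in T -> z \in gens T by move=> hz; apply: mem_gen; rewrite inE.
rewrite inE mem_cat !inE.
case: ht => def_t; rewrite /T def_t in mS *.
  have bS : b \in gens (p ++ [:: b, a ^ b & q]) by apply: mS; rewrite mem_cat !inE eqxx orbT.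
  have abS : a ^ b \in gens (p ++ [:: b, a ^ b & q]) by apply: mS; rewrite mem_cat !inE eqxx !orbT.
  case/or4P=> [hp|/eqP->|/eqP->|hq] //; first (by apply: mS; rewrite mem_cat hp);
    last (by apply: mS; rewrite mem_cat !inE hq !orbT).
  by rewrite -[X in X \in _](conjgK b a) groupJ ?groupV.
have aS : a \in gens (p ++ [:: a * b * a^-1, a & q]) by apply: mS; rewrite mem_cat !inE eqxx !orbT.
have abS : a * b * a^-1 \in gens (p ++ [:: a * b * a^-1, a & q]) by apply: mS; rewrite mem_cat !inE eqxx orbT.
case/or4P=> [hp|/eqP->|/eqP->|hq] //; first (by apply: mS; rewrite mem_cat hp);
  last (by apply: mS; rewrite mem_cat !inE hq !orbT).
have eb : (a * b * a^-1) ^ a = b by rewrite conjgE !mulgA mulVg mul1g mulgKV.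
by rewrite -[X in X \in _]eb groupJ.
Qed.

Lemma eqv_gen s t : eqv s t -> gens t = gens s.
Proof.
elim=> [//|s' t' hb|s' t' _ -> //|s' u t' _ h1 _ h2]; last congruence.
by apply/eqP; rewrite eqEsubset bstep_gen_sub ?bstep_gen_sup.
Qed.

Lemma eqv_connect_gen s t : eqv s t -> forall k (ts tt : k.-tuple gT),
  s = val ts -> t = val tt -> connect (@hrel gT C k) ts tt.
Proof.
elim=> {s t} [s|s t hb|s t _ IH|s u t h1 IH1 _ IH2] k ts tt es et.
- by have -> : ts = tt by apply: val_inj; rewrite -es -et.
- by apply: connect1; rewrite /hrel bstep_hstep // -es -et.
- rewrite (sym_connect_sym _); first exact: IH.
  by move=> y z; rewrite /hrel orbC.
- have su : size u == k by rewrite (eqv_size h1) es size_tuple.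
  apply: connect_trans (IH1 k ts (Tuple su) es erefl) (IH2 k (Tuple su) tt erefl et).
Qed.

Lemma eqv_connect k (ts tt : k.-tuple gT) : eqv ts tt -> connect (@hrel gT C k) ts tt.
Proof. by move/eqv_connect_gen; apply. Qed.

Lemma connect_eqv k (ts tt : k.-tuple gT) : connect (@hrel gT C k) ts tt -> eqv ts tt.
Proof.
case/connectP=> pth; elim: pth ts => [|u pth IH] ts /= => [_ ->|/andP[hu hp] et]; first exact: eqv_refl.
apply: eqv_trans (IH u hp et).
by case/orP: hu => /hstep_bstep hb; [apply: eqv_step | apply: eqv_sym; apply: eqv_step].
Qed.

End Comb.

Section Moves.
Local Open Scope group_scope.
Variable gT : finGroupType.
Variables (G : {group gT}) (x : gT).
Hypothesis xG : x \in G.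
Local Notation C := (x ^: G).
Local Notation n := #[x].

Lemma memCG a : a \in C -> a \in G.
Proof. by move=> aC; apply: (subsetP (class_subG xG (subxx G))). Qed.

Lemma Cconj a g : a \in C -> g \in G -> a ^ g \in C.
Proof.
by case/imsetP=> h hG -> gG; rewrite -conjgM memJ_class // groupM.
Qed.

Lemma Cexp a : a \in C -> a ^+ n = 1.
Proof. by case/imsetP=> h _ ->; rewrite -conjXg expg_order conj1g. Qed.

Lemma prod_nseq m (y : gT) : \prod_(i <- nseq m y) i = y ^+ m.
Proof. by elim: m => [|m IH]; rewrite ?big_nil // big_cons IH expgS. Qed.

Lemma Cconj2 a b : a \in C -> b \in C -> a * b * a^-1 \in C.
Proof.
move=> aC bC; have -> : a * b * a^-1 = b ^ a^-1 by rewrite conjgE invgK mulgA.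
by apply: Cconj; rewrite // groupV memCG.
Qed.

Lemma bstep_allC s t : bstep C s t -> all (mem C) s = all (mem C) t.
Proof.
case=> p [q [a [b [aC bC -> [->|->]]]]]; rewrite !all_cat /= aC bC.
  by rewrite Cconj ?memCG.
by rewrite Cconj2.
Qed.

Lemma eqv_allC s t : eqv C s t -> all (mem C) s = all (mem C) t.
Proof.
elim=> [//|s' t' /bstep_allC //|s' t' _ -> //|s' u t' _ h1 _ h2]; congruence.
Qed.

Lemma T1 d u v : d \in C -> all (mem C) u ->
  eqv C (u ++ d :: v) (d :: map (conjg^~ d) u ++ v).
Proof.
move=> dC; elim: u => [|y u IH] /=; first by move=> _; apply: eqv_refl.
case/andP=> yC uC; apply: eqv_trans (eqv_catl [:: y] (IH uC)) _.
apply: eqv_step; exists [::], (map (conjg^~ d) u ++ v), y, d; split=> //.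
by left.
Qed.

Lemma T1' b X : b \in C -> all (mem C) X ->
  eqv C (b :: X) (X ++ [:: b ^ \prod_(y <- X) y]).
Proof.
elim: X b => [|y X IH] b bC /=; first by rewrite big_nil conjg1 => _; apply: eqv_refl.
case/andP=> yC XC.
rewrite big_cons conjgM.
apply: (eqv_trans _ (eqv_catl [:: y] (IH (b ^ y) (Cconj bC (memCG yC)) XC))).
apply: eqv_step; exists [::], X, b, y; split=> //; by left.
Qed.

Lemma Lmove e a w : e \in C -> all (mem C) w -> a \in w ->
  eqv C (nseq n e ++ w) (nseq n (e ^ a) ++ w).
Proof.
move=> eC wC aw; have aC : a \in C by apply: (allP wC).
case/splitPr: aw wC => u v wC.
have uC : all (mem C) u by move: wC; rewrite all_cat => /andP[].
have eaC : e ^ a \in C by apply: Cconj; rewrite ?memCG.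
have nC : forall y, y \in C -> all (mem C) (nseq n y).
  by move=> y yC; apply/allP => z; rewrite mem_nseq => /andP[_ /eqP->].
apply: eqv_trans (eqv_catl _ (T1 v aC uC)) _.
set R := map _ u ++ v.
apply: eqv_trans (T1 R aC (nC e eC)) _.
rewrite map_nseq.
apply: eqv_trans (eqv_catr R (T1' aC (nC _ eaC))) _.
rewrite prod_nseq Cexp // conjg1 -catA /=.
apply: eqv_catl; apply: eqv_sym; exact: T1.
Qed.

Lemma Lstar r e w : e \in C -> all (mem C) w -> all (mem w) r ->
  eqv C (nseq n e ++ w) (nseq n (e ^ \prod_(y <- r) y) ++ w).
Proof.
elim: r e => [|a r IH] e eC wC /=; first by rewrite big_nil conjg1; move=> _; apply: eqv_refl.
case/andP=> aw rw; have aC : a \in C by apply: (allP wC).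
apply: eqv_trans (Lmove eC wC aw) _.
by rewrite big_cons conjgM; apply: IH => //; apply: Cconj; rewrite ?memCG.
Qed.

Lemma Coll m t d : d \in C -> all (mem C) t -> m <= count_mem d t ->
  exists w, eqv C t (nseq m d ++ w).
Proof.
move=> dC; elim: m t => [|m IH] t tC hm; first by exists t; apply: eqv_refl.
have dt : d \in t by rewrite -has_pred1 has_count (leq_trans _ hm).
case/splitPr: dt tC hm => u v tC hm.
have uC : all (mem C) u by move: tC; rewrite all_cat => /andP[].
have vC : all (mem C) v by move: tC; rewrite all_cat /= => /and3P[].
have cm : count_mem d (map (conjg^~ d) u) = count_mem d u.
  rewrite count_map; apply: eq_count => y /=.
  have dd : d ^ d = d by rewrite conjgE mulKg.
  by rewrite -{2}dd (inj_eq (conjg_inj d)).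
have RC : all (mem C) (map (conjg^~ d) u ++ v).
  rewrite all_cat vC andbT all_map; apply/allP => y yu /=.
  by apply: Cconj; [apply: (allP uC) | rewrite memCG].
have [w hw] : exists w, eqv C (map (conjg^~ d) u ++ v) (nseq m d ++ w).
  apply: IH => //; move: hm; rewrite count_cat /= eqxx count_cat cm addnS.
  by rewrite ltnS.
exists w; apply: eqv_trans (T1 v dC uC) _.
exact: (eqv_catl [:: d] hw).
Qed.

End Moves.

Lemma ev_const (a : nat -> nat) N : (forall k, N <= k -> a k.+1 <= a k) ->
  exists M, forall k, M <= k -> a k.+1 = a k.
Proof.
move=> dec.
have mono : forall d j, N <= j -> a (j + d) <= a j.
  move=> d j Nj; elim: d => [|d IH]; first by rewrite addn0.
  by rewrite addnS (leq_trans (dec _ _) IH) // (leq_trans Nj) // leq_addr.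
suff: forall v j, N <= j -> a j <= v -> exists M, forall k, M <= k -> a k.+1 = a k.
  by apply; last exact: leqnn.
elim=> [|v IH] j Nj ajv.
  exists j => k jk; have := dec k (leq_trans Nj jk).
  have := mono (k - j) j Nj; rewrite subnKC // => h1 h2.
  lia.
destruct (classic (forall k, j <= k -> a k.+1 = a k)) as [H|H]; first by exists j.
case: (not_all_ex_not _ _ H) => k Hk.
have jk : j <= k by case: (leqP j k) => // kj; exfalso; apply: Hk => jk; lia.
have ne : a k.+1 <> a k by move=> e; apply: Hk => _.
apply: (IH k.+1); first by rewrite (leq_trans Nj) // (leq_trans jk).
have h1 := dec k (leq_trans Nj jk).
have := mono (k - j) j Nj; rewrite subnKC // => h2.
have : a k.+1 < a k by rewrite ltn_neqAle h1 andbT; apply/eqP.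
move=> h3; rewrite -ltnS (leq_trans h3) // (leq_trans h2) //.
Qed.

Lemma periodic (h : nat -> nat) n N : 0 < n ->
  (forall k, N <= k -> h (n + k) <= h k) ->
  exists M, forall k, M <= k -> h (n + k) = h k.
Proof.
case: n => // n' _ hm.
pose S k := \sum_(i < n'.+1) h (k + i).
have idS : forall k, S k.+1 + h k = S k + h (n'.+1 + k).
  move=> k; rewrite /S [X in X + h k = _]big_ord_recr [X in _ = X + _]big_ord_recl /= addn0.
  have -> : \sum_(i < n') h (k.+1 + i) = \sum_(i < n') h (k + bump 0 i).
    by apply: eq_bigr => i _; rewrite addSnnS.
  have -> : k.+1 + n' = n'.+1 + k by rewrite addSn addnC -addSn.
  by rewrite addnC addnA.
have [M HM] : exists M, forall k, M <= k -> S k.+1 = S k.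
  apply: (@ev_const S N) => k Nk.
  have := idS k; have := hm k Nk; lia.
exists M => k Mk; have := idS k; rewrite HM //; lia.
Qed.

Section RatPart.
Local Open Scope ring_scope.

Lemma sum_delta (F : nat -> rat) j k :
  \sum_(i < k) ((i == j :> nat)%:R * F i) = (j < k)%N%:R * F j.
Proof.
case: (ltnP j k) => [jk|kj].
  rewrite (bigD1 (Ordinal jk)) //= eqxx mul1r big1 ?addr0 // => i hi.
  have -> : (val i == j) = false.
    apply/negbTE; apply: contra hi => /eqP e; apply/eqP/val_inj => /=; exact: e.
  by rewrite mul0r.
rewrite mul0r big1 // => i _.
by rewrite ltn_eqF ?mul0r // (leq_trans (ltn_ord i) kj).
Qed.

Lemma sum_q (F : nat -> rat) n k : (0 < n)%N ->
  \sum_(i < k.+1) (1 - 'X^n : {poly rat})`_i * F (k - i)%N = F k - (n <= k)%N%:R * F (k - n)%N.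
Proof.
case: n => // n' _.
rewrite big_ord_recl /= coefB coef1 coefXn /= subr0 mul1r subn0.
congr (_ + _).
have -> : \sum_(i < k) (1 - 'X^(n'.+1) : {poly rat})`_(bump 0 i) * F (k - bump 0 i)%N
   = - \sum_(i < k) ((i == n' :> nat)%:R * F (k - i.+1)%N).
  rewrite -sumrN; apply: eq_bigr => i _.
  by rewrite coefB coef1 coefXn /bump /= add1n eqSS sub0r mulNr.
by rewrite (sum_delta (fun i => F (k - i.+1)%N)).
Qed.

End RatPart.

Section Key.
Local Open Scope group_scope.
Variable gT : finGroupType.

Lemma size_sum (C : {set gT}) (t : seq gT) : all (mem C) t ->
  size t = \sum_(d in C) count_mem d t.
Proof.
elim: t => [|y t IH] /=; first by rewrite big1.
case/andP=> yC tC; rewrite big_split /= -IH // -add1n; congr (_ + _).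
rewrite (bigD1 y) //= eqxx big1 ?addn0 // => d /andP[_ hd].
by rewrite eq_sym (negbTE hd).
Qed.

Lemma pigeon (C : {set gT}) m (t : seq gT) : all (mem C) t -> m * #|C| < size t ->
  exists2 d, d \in C & m < count_mem d t.
Proof.
move=> tC hs.
have [d /andP[dC hd] | none] := pickP [pred d | (d \in C) && (m < count_mem d t)].
  by exists d.
move: hs; rewrite (size_sum tC) ltnNge => /negP []; rewrite mulnC -sum_nat_const.
apply: leq_sum => d dC; have := none d; rewrite /= dC /= => /negbT; by rewrite -leqNgt.
Qed.

Variables (G : {group gT}) (x : gT).
Hypothesis xG : x \in G.
Local Notation C := (x ^: G).
Local Notation n := #[x].

Lemma nseqS_cat (d : gT) m w : nseq m.+1 d ++ w = nseq m d ++ d :: w.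
Proof. by elim: m => //= m ->. Qed.

Lemma key t : all (mem C) t -> gens t = G -> \prod_(y <- t) y = 1 ->
  n * #|C| < size t ->
  exists w, [/\ size w + n = size t, all (mem C) w, gens w = G,
               \prod_(y <- w) y = 1 & eqv C t (nseq n x ++ w)].
Proof.
move=> tC tG tP ts.
have [d dC hd] := pigeon tC ts.
have [w1 hw1] := Coll xG dC tC hd.
rewrite nseqS_cat in hw1; set w := d :: w1 in hw1.
have wC : all (mem C) w.
  by move: tC; rewrite (eqv_allC xG hw1) all_cat => /andP[].
have wG : gens w = G.
  rewrite -tG -(eqv_gen hw1) /gens; congr <<_>>; apply/setP => y.
  by rewrite !inE mem_cat mem_nseq /w inE order_gt0 /=; case: (y == d) => //=; rewrite orbF.
have wP : \prod_(y <- w) y = 1.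
  by rewrite -[RHS]tP -(eqv_prod hw1) big_cat /= prod_nseq (Cexp dC) mul1g.
have wS : size w + n = size t by rewrite -(eqv_size hw1) size_cat size_nseq addnC.
exists w; split=> //.
apply: eqv_trans hw1 _.
case/imsetP: (dC) => h hG dE.
have : h^-1 \in gens w by rewrite wG groupV.
case/gen_prodgP=> m [c cw ce].
have rw : all (mem w) [seq c i | i <- index_enum 'I_m].
  by apply/allP => y /mapP[i _ ->]; have := cw i; rewrite inE.
have := Lstar xG dC wC rw.
by rewrite big_map -ce dE conjgK.
Qed.

End Key.

Section Count.
Local Open Scope group_scope.
Variable gT : finGroupType.
Variables (G : {group gT}) (x : gT).
Hypothesis xG : x \in G.
Local Notation C := (x ^: G).
Local Notation n := #[x].

Lemma hrel_sym k : symmetric (@hrel gT C k).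
Proof. by move=> y z; rewrite /hrel orbC. Qed.

Lemma hcount_mono k : n * #|C| <= k -> hcount G C (n + k) <= hcount G C k.
Proof.
move=> hk.
pose f (w : k.-tuple gT) : (n + k).-tuple gT := cat_tuple (nseq_tuple n x) w.
pose Phi (S : {set k.-tuple gT}) : {set (n + k).-tuple gT} :=
  [set u | [exists w in S, connect (@hrel gT C (n + k)) (f w) u]].
have fcon : forall w w' : k.-tuple gT, connect (@hrel gT C k) w w' ->
    connect (@hrel gT C (n + k)) (f w) (f w').
  move=> w w' /connect_eqv hw; apply: eqv_connect => /=.
  exact: eqv_catl.
rewrite /hcount; set A := [set _ | t in Wk G C (n + k)].
set B := [set _ | t in Wk G C k].
suff sub : A \subset Phi @: B.
  exact: leq_trans (subset_leq_card sub) (leq_imset_card _ _).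
apply/subsetP => S /imsetP[t tW ->].
move: tW; rewrite inE => /and3P[tC /eqP tG /eqP tP].
have ts : n * #|C| < size t by have n0 := order_gt0 x; rewrite size_tuple; lia.
have [w [ws wC wG wP hw]] := key xG tC tG tP ts.
have sw : size w == k by rewrite -(eqn_add2r n) ws size_tuple addnC.
pose wt := Tuple sw.
have ctf : connect (@hrel gT C (n + k)) t (f wt) by apply: eqv_connect.
apply/imsetP; exists [set u | connect (@hrel gT C k) wt u].
  apply/imsetP; exists wt => //.
  by rewrite inE wC /= wP eqxx andbT; apply/eqP.
apply/setP => u; rewrite !inE; apply/idP/existsP.
  move=> tu; exists wt; rewrite inE connect0 /=.
  apply: connect_trans tu.
  by rewrite (sym_connect_sym (@hrel_sym _)).
case=> w' /andP[]; rewrite inE => /fcon c1 c2.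
exact: connect_trans ctf (connect_trans c1 c2).
Qed.

End Count.

Unset Implicit Arguments.

Theorem proposition4p4 (gT : finGroupType) (G : {group gT}) (C : {set gT}) :
  (exists2 x, x \in G & C = (x ^: G)%g) ->
  C != [set 1%g] ->
  <<C>>%g = G :> {set gT} ->
  exists p q : {poly rat},
    (q != 0)%R /\
    forall k : nat,
      (\sum_(i < k.+1) q`_i * ((hcount G C (k - i)%N)%:R : rat) = p`_k)%R.
Proof.
case=> x xG -> _ _.
pose h := fun j => hcount G (x ^: G)%g j.
have n0 : (0 < #[x]%g)%N := order_gt0 x.
have [M HM] := @periodic h #[x]%g (#[x]%g * #|(x ^: G)%g|) n0 (fun k hk => hcount_mono xG hk).
exists (\poly_(i < M + #[x]%g) ((h i)%:R - (#[x]%g <= i)%N%:R * (h (i - #[x]%g)%N)%:R))%R.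
exists (1 - 'X^#[x]%g)%R; split.
  apply/eqP => q0; have := congr1 (fun r : {poly rat} => (r`_0)%R) q0.
  have z : (0 == #[x]%g)%N = false by rewrite eq_sym gtn_eqF.
  rewrite /= coefB coef1 coefXn coef0 z GRing.subr0 => /eqP.
  by rewrite GRing.oner_eq0.
move=> k; rewrite (sum_q (fun j => (h j)%:R)%R) // coef_poly.
case: ifP => // /negbT; rewrite -leqNgt => hk.
have nk : (#[x]%g <= k)%N by lia.
rewrite nk GRing.mul1r; have e := HM (k - #[x]%g)%N ltac:(lia).
by rewrite subnKC // in e; rewrite e GRing.subrr.
Qed.
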